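(* Let $G=(V,E)$ be a regular simple graph on $n$ vertices and let $2\le k\le n-2$ be such that $F_k(G)$ is regular. Then there exists a constant $c$, depending on $k$, the degree of $G$ and the degree of $F_k(G)$, such that $d_A(b)=c$ for every vertex $A$ of $F_k(G)$ (i.e. every $k$-subset $A\subseteq V$) and every $b\in V\setminus A$.
   Context: For a simple graph $G=(V,E)$ on $n$ vertices and an integer $1\le k<n$, the $k$-token graph $F_k(G)$ is the graph whose vertices are all $k$-element subsets of $V$, two such subsets $A,B$ being adjacent whenever their symmetric difference $A\triangle B$ is a pair $\{a,b\}$ with $a$ adjacent to $b$ in $G$. For $X\subseteq V$ and $v\in V$, $d_X(v)$ denotes the number of neighbors of $v$ in $G$ that lie in $X$. *)

(* Defs.v *)
From mathcomp Require Import all_boot.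
Set Implicit Arguments. Unset Strict Implicit. Unset Printing Implicit Defensive.

Section Token.
Variable T : finType.

Definition simple_graph (e : rel T) : Prop := symmetric e /\ irreflexive e.

Definition gdeg (e : rel T) (v : T) : nat := #|[set w | e v w]|.

Definition regular (e : rel T) : Prop := exists r, forall v, gdeg e v = r.

Definition dX (e : rel T) (X : {set T}) (v : T) : nat := #|[set w in X | e v w]|.

Definition tok_adj (e : rel T) (A B : {set T}) : bool :=
  [exists a, exists b, e a b && ((A :\: B) :|: (B :\: A) == [set a; b])].

Definition tok_deg (e : rel T) (k : nat) (A : {set T}) : nat :=
  #|[set B : {set T} | (#|B| == k) && tok_adj e A B]|.

Definition tok_regular (e : rel T) (k : nat) : Prop :=
  exists d, forall A : {set T}, #|A| = k -> tok_deg e k A = d.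
End Token.

(* Main.v *)
Require Import Defs.
From mathcomp Require Import all_boot.
From mathcomp Require Import zify.
Set Implicit Arguments. Unset Strict Implicit. Unset Printing Implicit Defensive.

Section Aux.
Variable T : finType.
Variable e : rel T.
Hypothesis hsym : symmetric e.
Hypothesis eirr : irreflexive e.
Lemma dXE X v : dX e X v = \sum_(w in X) (e v w : nat).
Proof.
rewrite /dX -sum1_card big_mkcond [RHS]big_mkcond /=.
apply: eq_bigr => w _; rewrite inE; by case: (w \in X); case: (e v w).
Qed.

Lemma gdegE v : gdeg e v = \sum_w (e v w : nat).
Proof.
rewrite /gdeg -sum1_card big_mkcond /=.
apply: eq_bigr => w _; rewrite inE; by case: (e v w).
Qed.

Definition F (A : {set T}) := \sum_(a in A) \sum_(b in ~: A) (e a b : nat).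

Lemma F_add (S : {set T}) x : x \notin S ->
  F (x |: S) + 2 * dX e S x = gdeg e x + F S.
Proof.
move=> xS.
have hC : ~: (x |: S) = (~: S) :\ x.
  by apply/setP => z; rewrite !inE negb_or andbC.
have xC : x \in ~: S by rewrite inE.
have hg : \sum_w (e x w : nat) = \sum_(w in S) (e x w : nat) + \sum_(b in ~: S :\ x) (e x b : nat).
  rewrite (bigID (fun w => w \in x |: S)) /=.
  rewrite big_setU1 //= eirr add0n.
  rewrite [X in _ + X](eq_bigl (fun z => z \in ~: S :\ x)) //.
  by move=> z; rewrite /= -hC in_setC.
rewrite /F big_setU1 //= gdegE dXE hC hg.
have -> : \sum_(a in S) \sum_(b in ~: S) (e a b : nat) =
   \sum_(a in S) (e x a + \sum_(b in ~: S :\ x) (e a b : nat)).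
  apply: eq_bigr => a _; by rewrite (big_setD1 x xC) /= hsym.
rewrite big_split /=. lia.
Qed.

Lemma symd (A B : {set T}) a b : #|A| = #|B| ->
  (forall z, ((z \in A) && (z \notin B)) || ((z \in B) && (z \notin A)) = (z == a) || (z == b)) ->
  a \in A -> a \notin B -> (b \in B) && (b \notin A).
Proof.
move=> hc Hz aA aB.
have hb := Hz b; rewrite eqxx orbT in hb.
case/orP: hb => // /andP [bA bB]; exfalso.
have h0 : #|B :\: A| = 0.
  apply/eqP; rewrite cards_eq0; apply/eqP/setP => z; rewrite !inE.
  apply/negbTE/andP => [[zA zB]].
  have := Hz z; rewrite zB (negbTE zA) orbT => /esym /orP [] /eqP ez; subst z.
    by rewrite aA in zA.
  by rewrite bA in zA.
have h1 : 0 < #|A :\: B| by apply/card_gt0P; exists a; rewrite !inE aA aB.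
have : #|A :\: B| = #|B :\: A| by rewrite !cardsD hc setIC.
by rewrite h0 => h2; rewrite h2 in h1.
Qed.

Lemma setB (A B : {set T}) a b :
  (forall z, ((z \in A) && (z \notin B)) || ((z \in B) && (z \notin A)) = (z == a) || (z == b)) ->
  a \in A -> a \notin B -> b \in B -> b \notin A -> B = b |: (A :\ a).
Proof.
move=> Hz aA aB bB bA; apply/setP => z; rewrite !inE.
case: (eqVneq z b) => [->|zb]; first by rewrite bB.
case: (eqVneq z a) => [->|za]; first by rewrite (negbTE aB).
move: (Hz z); rewrite (negbTE za) (negbTE zb) /=.
by case: (z \in A); case: (z \in B).
Qed.

Lemma tokF (A : {set T}) : tok_deg e #|A| A = F A.
Proof.
set P := [set p : T * T | (p.1 \in A) && (p.2 \notin A) && e p.1 p.2].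
set f := fun p : T * T => p.2 |: (A :\ p.1).
have E : [set B : {set T} | (#|B| == #|A|) && tok_adj e A B] = [set f p | p in P].
  apply/setP => B; rewrite inE; apply/idP/imsetP.
    case/andP => /eqP hB /existsP [a /existsP [b /andP [eab /eqP H]]].
    have Hz : forall z, ((z \in A) && (z \notin B)) || ((z \in B) && (z \notin A)) = (z == a) || (z == b).
      move=> z; move/setP: H => /(_ z); rewrite !inE.
      by case: (z \in A); case: (z \in B).
    have Hz' : forall z, ((z \in B) && (z \notin A)) || ((z \in A) && (z \notin B)) = (z == b) || (z == a).
      by move=> z; rewrite orbC Hz orbC.
    have := Hz a; rewrite eqxx /=.
    case/orP => /andP [aA aB].
      have /andP [bB bA] := symd (esym hB) Hz aA aB.
      exists (a, b); last by rewrite /f /= (setB Hz).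
      by rewrite inE /= aA bA eab.
    have Hz2 : forall z, ((z \in B) && (z \notin A)) || ((z \in A) && (z \notin B)) = (z == a) || (z == b).
      by move=> z; rewrite orbC Hz.
    have Hz1 : forall z, ((z \in A) && (z \notin B)) || ((z \in B) && (z \notin A)) = (z == b) || (z == a).
      by move=> z; rewrite Hz orbC.
    have /andP [bA bB] := symd hB Hz2 aA aB.
    exists (b, a); last by rewrite /f /= (setB Hz1).
    by rewrite inE /= aB bA hsym eab.
  case=> [[a b]]; rewrite inE /= => /andP [/andP [aA bA] eab] ->.
  have ab : a != b by apply/eqP => hh; subst b; rewrite aA in bA.
  apply/andP; split.
    rewrite /f /= cardsU1 !inE /= (negbTE bA) andbF /= (cardsD1 a A) aA.
    by [].
  apply/existsP; exists a; apply/existsP; exists b; rewrite eab /=.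
  apply/eqP/setP => z; rewrite /f /= !inE.
  case: (eqVneq z b) => [->|zb]; first by rewrite (negbTE bA) /= orbT.
  case: (eqVneq z a) => [->|za]; first by rewrite aA.
  by case: (z \in A).
have inj : {in P &, injective f}.
  move=> [a b] [a' b']; rewrite !inE /= => /andP [/andP [aA bA] _] /andP [/andP [aA' bA'] _].
  rewrite /f /= => /setP H.
  have h1 := H a; have h2 := H b; rewrite !inE !eqxx /= in h1 h2.
  have ab : a != b by apply/eqP => hh; subst b; rewrite aA in bA.
  have ab' : a != b' by apply/eqP => hh; subst b'; rewrite aA in bA'.
  rewrite (negbTE ab) (negbTE ab') aA /= in h1.
  have aa' : a = a' by apply/eqP; move: h1; case: (a == a').
  subst a'.
  rewrite (negbTE bA) /= andbF orbF in h2.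
  by rewrite (eqP (esym h2)).
rewrite /tok_deg E card_in_imset // /F pair_big /=.
rewrite -sum1_card big_mkcond [RHS]big_mkcond /=.
apply: eq_bigr => p _; rewrite !inE.
by case: (p.1 \in A); case: (p.2 \in A); case: (e p.1 p.2).
Qed.


Lemma kk k : 2 <= k -> (1 + (k - 2)).+1 = k. Proof. lia. Qed.

Lemma exists_sub (U : {set T}) m : m <= #|U| -> exists S : {set T}, S \subset U /\ #|S| = m.
Proof.
elim: m => [|m IH] hm; first by exists set0; rewrite sub0set cards0.
have [S [sSU cS]] := IH (ltnW hm).
have : 0 < #|U :\: S| by rewrite cardsDS // cS subn_gt0.
case/card_gt0P => u; rewrite inE => /andP [uS uU].
exists (u |: S); split; first by rewrite subUset sub1set uU sSU.
by rewrite cardsU1 uS cS.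
Qed.

Lemma dXU1 (S : {set T}) z x : z \notin S -> dX e (z |: S) x = e x z + dX e S x.
Proof. by move=> zS; rewrite !dXE big_setU1. Qed.

Variables (k d r : nat).
Hypothesis Hd : forall A : {set T}, #|A| = k -> tok_deg e k A = d.
Hypothesis Hr : forall v, gdeg e v = r.
Hypothesis hk : 2 <= k.
Hypothesis hn : k + 2 <= #|T|.

Lemma step3 (S : {set T}) x y : #|S|.+1 = k -> x \notin S -> y \notin S ->
  dX e S x = dX e S y.
Proof.
move=> cS xS yS.
have hx := F_add xS; have hy := F_add yS.
have cx : #|x |: S| = k by rewrite cardsU1 xS.
have cy : #|y |: S| = k by rewrite cardsU1 yS.
rewrite -(tokF (x |: S)) cx Hd // Hr in hx.
rewrite -(tokF (y |: S)) cy Hd // Hr in hy.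
lia.
Qed.

Lemma step4 x y z w : x != y -> x != z -> x != w -> y != z -> y != w -> z != w ->
  e x z + e y w = e y z + e x w.
Proof.
move=> xy xz xw yz yw zw.
set U := ~: (x |: (y |: (z |: [set w]))).
have c4 : #|(x |: (y |: (z |: [set w])))| = 4.
  rewrite !cardsU1 cards1 !inE (negbTE xy) (negbTE xz) (negbTE xw) (negbTE yz) (negbTE yw) (negbTE zw).
  by [].
have cU : k - 2 <= #|U|.
  have := cardsC (x |: (y |: (z |: [set w]))); rewrite c4 -/U. lia.
have [S0 [sS0 cS0]] := exists_sub cU.
have nS0 v : v \in (x |: (y |: (z |: [set w]))) -> v \notin S0.
  move=> vin; apply/negP => /(subsetP sS0); by rewrite inE vin.
have xS := nS0 x; have yS := nS0 y; have zS := nS0 z; have wS := nS0 w.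
rewrite !inE !eqxx ?orbT /= in xS yS zS wS.
have xS0 := xS isT; have yS0 := yS isT; have zS0 := zS isT; have wS0 := wS isT.
have h1 : dX e (z |: S0) x = dX e (z |: S0) y.
  apply: step3; first by rewrite cardsU1 zS0 cS0 kk.
    by rewrite !inE negb_or xz.
  by rewrite !inE negb_or yz.
have h2 : dX e (w |: S0) x = dX e (w |: S0) y.
  apply: step3; first by rewrite cardsU1 wS0 cS0 kk.
    by rewrite !inE negb_or xw.
  by rewrite !inE negb_or yw.
rewrite !dXU1 // in h1 h2.
move: h1 h2; clear; lia.
Qed.

Lemma noasym x y z : x != y -> x != z -> y != z -> e x z -> ~~ e y z -> False.
Proof.
move=> xy xz yz exz eyz.
have hw : forall w, w != x -> w != y -> e x w && ~~ e y w.
  move=> w wx wy; case: (eqVneq z w) => [<-|zw]; first by rewrite exz eyz.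
  have := step4 xy xz (negbT (introF eqP (fun h => (negP wx) (introT eqP (esym h))))) yz
     (negbT (introF eqP (fun h => (negP wy) (introT eqP (esym h))))) zw.
  rewrite exz (negbTE eyz).
  by case: (e x w); case: (e y w).
have c1 : gdeg e y <= 1.
  rewrite /gdeg -(cards1 x); apply: subset_leq_card; apply/subsetP => v.
  rewrite !inE => eyv.
  case: (eqVneq v x) => // vx.
  have vy : v != y by apply/eqP => h; subst v; rewrite eirr in eyv.
  by have := hw v vx vy; rewrite eyv andbF.
have c2 : #|T| - 2 <= gdeg e x.
  have : #|~: [set x; y]| = #|T| - 2.
    have := cardsC [set x; y]; rewrite cards2 xy. lia.
  move=> <-; apply: subset_leq_card; apply/subsetP => v.
  rewrite !inE negb_or => /andP [vx vy].
  by have /andP [] := hw v vx vy.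
move: c1 c2; rewrite !Hr. lia.
Qed.

Lemma samez x y z : x != z -> y != z -> e x z = e y z.
Proof.
move=> xz yz; case: (eqVneq x y) => [->//|xy].
case exz: (e x z); case eyz: (e y z) => //.
  by exfalso; apply: (noasym xy xz yz exz); rewrite eyz.
exfalso; apply: (noasym (negbT (introF eqP (fun h => (negP xy) (introT eqP (esym h))))) yz xz eyz).
by rewrite exz.
Qed.

Lemma allsame u v u' v' : u != v -> u' != v' -> e u v = e u' v'.
Proof.
move=> uv uv'.
case: (eqVneq u' v) => [eu|u'v].
  subst u'.
  rewrite (hsym v v').
  apply: samez => //; by rewrite eq_sym.
rewrite (samez uv u'v) hsym (hsym u' v').
apply: samez => //; by rewrite eq_sym.
Qed.

End Aux.

Theorem lemma1 (T : finType) (e : rel T) (k : nat) :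
  simple_graph e -> regular e ->
  2 <= k -> k <= #|T| - 2 ->
  tok_regular e k ->
  exists c : nat, forall (A : {set T}) (b : T),
    #|A| = k -> b \notin A -> dX e A b = c.
Proof.
move=> [hsym eirr] [r Hr] hk hn [d Hd].
have hn' : k + 2 <= #|T| by lia.
exists (if [exists u, exists v, e u v] then k else 0).
move=> A b cA bA.
case: ifP.
  case/existsP => u /existsP [v euv].
  have uv : u != v by apply/eqP => h; subst v; rewrite eirr in euv.
  rewrite -cA /dX; congr (#|pred_of_set _|).
  apply/setP => w; rewrite inE.
  case wA: (w \in A) => //=.
  have bw : b != w by apply/eqP => h; subst w; rewrite wA in bA.
  by rewrite (allsame hsym eirr Hd Hr hk hn' bw uv).
move/negbT; rewrite negb_exists => /forallP H.
rewrite /dX; apply/eqP; rewrite cards_eq0; apply/eqP/setP => w; rewrite !inE.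
have := H b; rewrite negb_exists => /forallP /(_ w) /negbTE ->.
by rewrite andbF.
Qed.
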